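(* Let $a=e_1$, let $\Sigma$ be symmetric positive definite with minimal eigenvalue $\gamma_{\min}$, and let $\widehat\Sigma$ be symmetric with $\delta:=\|\Sigma-\widehat\Sigma\|_{op}\le\gamma_{\min}/2$. Let $(\underline n^*,\underline\lambda^* )$ minimize $R(\underline n,\underline\lambda)$ and let $(\hat{\underline n},\hat{\underline\lambda})$ minimize $\widehat R(\underline n,\underline\lambda)$, both over feasible unbiased pairs. Then \[ R(\hat{\underline n},\hat{\underline\lambda})\le R(\underline n^*,\underline\lambda^* )+\frac{4\delta}{\gamma_{\min}}\,\sigma^2_{\mathrm{classical}}. \]
   Context: $\mathcal I$ is a collection of nonempty subsets of $\{1,\dots,k\}$; $P_I:\mathbb{R}^k\to\mathbb{R}^{|I|}$ the coordinate projection onto $I$; for a matrix $A$, $A_I=P_IAP_I^\top$. Costs $c_I\in\mathbb{R}^m_{\ge0}$, budget $B\in\mathbb{R}^m_{\ge0}$, vector inequalities componentwise; an allocation $\underline n\in\mathbb{Z}^{\mathcal I}_{\ge0}$ is feasible if $\sum_In_Ic_I\le B$; weights $\lambda_I\in\mathbb{R}^{|I|}$ are unbiased if $\sum_{I:n_I>0}P_I^\top\lambda_I=a$. Define $R(\underline n,\underline\lambda)=\sum_{I:n_I>0}\frac1{n_I}\lambda_I^\top\Sigma_I\lambda_I$ and $\widehat R(\underline n,\underline\lambda)=\sum_{I:n_I>0}\frac1{n_I}\lambda_I^\top\widehat\Sigma_I\lambda_I$. $\sigma^2_{\mathrm{classical}}=\Sigma_{11}/n^0_{I^0}$ for some $I^0\in\mathcal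 I$ with $1\in I^0$, where $n^0_{I^0}\ge1$ is the largest integer $n$ with $nc_{I^0}\le B$. *)

(* Defs.v *)
From HB Require Import structures.
From mathcomp Require Import all_boot all_order all_algebra.
From mathcomp Require Import all_classical all_reals.
Set Implicit Arguments. Unset Strict Implicit. Unset Printing Implicit Defensive.
Import Order.TTheory GRing.Theory Num.Theory.
Local Open Scope ring_scope.
Local Open Scope classical_set_scope.

Section Defs.
Variables (R : realType) (k m : nat).

(* Coordinate projection P_I : R^k -> R^{|I|}, as a |I| x k matrix;
   the coordinates of I are listed in increasing order via enum_val. *)
Definition projI (I : {set 'I_k}) : 'M[R]_(#|I|, k) :=
  \matrix_(i < #|I|, j < k) (((enum_val i : 'I_k) == j)%:R).

Definition subM (A : 'M[R]_k) (I : {set 'I_k}) : 'M[R]_#|I| :=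
  projI I *m A *m (projI I)^T.

Definition sym_mx (A : 'M[R]_k) : Prop := A^T = A.

Definition posdef_mx (A : 'M[R]_k) : Prop :=
  forall x : 'cV[R]_k, x != 0 -> 0 < (x^T *m A *m x) 0 0.

Definition min_eigenvalue (A : 'M[R]_k) (gamma : R) : Prop :=
  eigenvalue A gamma /\ forall mu, eigenvalue A mu -> gamma <= mu.

Definition vnorm2 (x : 'cV[R]_k) : R := \sum_i (x i 0) ^+ 2.

Definition opnorm (A : 'M[R]_k) : R :=
  sup [set Num.sqrt (vnorm2 (A *m x)) | x in [set x : 'cV[R]_k | vnorm2 x = 1]].

Definition vle (u v : 'cV[R]_m) : Prop := forall r, u r 0 <= v r 0.

Definition feasible (II : {set {set 'I_k}}) (c : {set 'I_k} -> 'cV[R]_m)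
  (B : 'cV[R]_m) (n : {set 'I_k} -> nat) : Prop :=
  vle (\sum_(I in II) (n I)%:R *: c I) B.

Definition unbiased (II : {set {set 'I_k}}) (a : 'cV[R]_k)
  (n : {set 'I_k} -> nat) (lam : forall I : {set 'I_k}, 'cV[R]_#|I|) : Prop :=
  \sum_(I in II | (0 < n I)%N) (projI I)^T *m lam I = a.

(* R(n, lambda) with covariance S (use Sigma for R, Sigma-hat for hat R) *)
Definition risk (II : {set {set 'I_k}}) (S : 'M[R]_k)
  (n : {set 'I_k} -> nat) (lam : forall I : {set 'I_k}, 'cV[R]_#|I|) : R :=
  \sum_(I in II | (0 < n I)%N) (n I)%:R^-1 * ((lam I)^T *m subM S I *m lam I) 0 0.

Definition is_minimizer (II : {set {set 'I_k}}) (c : {set 'I_k} -> 'cV[R]_m)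
  (B : 'cV[R]_m) (a : 'cV[R]_k) (S : 'M[R]_k)
  (n0 : {set 'I_k} -> nat) (lam0 : forall I : {set 'I_k}, 'cV[R]_#|I|) : Prop :=
  [/\ feasible II c B n0, unbiased II a n0 lam0 &
      forall n lam, feasible II c B n -> unbiased II a n lam ->
        risk II S n0 lam0 <= risk II S n lam].

End Defs.

(* Main.v *)
Require Import Defs.
From HB Require Import structures.
From mathcomp Require Import all_boot all_order all_algebra.
From mathcomp Require Import all_classical all_reals.
From mathcomp Require Import ring lra.
Import Order.TTheory GRing.Theory Num.Theory.
Local Open Scope ring_scope.

Module Helpers.
Set Implicit Arguments. Unset Strict Implicit.

Definition bf (R : realType) n (A : 'M[R]_n) (x y : 'cV[R]_n) : R :=
  (x^T *m A *m y) 0 0.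

Lemma bfE (R : realType) n (A : 'M[R]_n) x y :
  bf A x y = \sum_i \sum_j x i 0 * A i j * y j 0.
Proof.
rewrite /bf mxE exchange_big /=; apply: eq_bigr => j _.
rewrite mxE mulr_suml; apply: eq_bigr => i _; by rewrite mxE.
Qed.

Lemma bfDl (R : realType) n (A : 'M[R]_n) x1 x2 y :
  bf A (x1 + x2) y = bf A x1 y + bf A x2 y.
Proof. by rewrite !bfE -big_split /=; apply: eq_bigr => i _; rewrite -big_split /=; apply: eq_bigr => j _; rewrite !mxE; ring. Qed.

Lemma bfDr (R : realType) n (A : 'M[R]_n) x y1 y2 :
  bf A x (y1 + y2) = bf A x y1 + bf A x y2.
Proof. by rewrite !bfE -big_split /=; apply: eq_bigr => i _; rewrite -big_split /=; apply: eq_bigr => j _; rewrite !mxE; ring. Qed.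

Lemma bfZl (R : realType) n (A : 'M[R]_n) t x y :
  bf A (t *: x) y = t * bf A x y.
Proof. by rewrite !bfE mulr_sumr; apply: eq_bigr => i _; rewrite mulr_sumr; apply: eq_bigr => j _; rewrite !mxE; ring. Qed.

Lemma bfZr (R : realType) n (A : 'M[R]_n) t x y :
  bf A x (t *: y) = t * bf A x y.
Proof. by rewrite !bfE mulr_sumr; apply: eq_bigr => i _; rewrite mulr_sumr; apply: eq_bigr => j _; rewrite !mxE; ring. Qed.

Lemma bfB (R : realType) n (A B : 'M[R]_n) x y :
  bf (A - B) x y = bf A x y - bf B x y.
Proof. by rewrite !bfE -sumrB /=; apply: eq_bigr => i _; rewrite -sumrB /=; apply: eq_bigr => j _; rewrite !mxE; ring. Qed.

Lemma bf_sym (R : realType) n (A : 'M[R]_n) x y :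
  A^T = A -> bf A x y = bf A y x.
Proof.
move=> sA; rewrite !bfE exchange_big; apply: eq_bigr => i _; apply: eq_bigr => j _.
rewrite -{1}sA mxE; ring.
Qed.

Lemma bf1 (R : realType) n (x : 'cV[R]_n) : bf 1%:M x x = \sum_i x i 0 ^+ 2.
Proof.
rewrite bfE; apply: eq_bigr => i _; rewrite (bigD1 i) //= big1 ?addr0.
  by rewrite !mxE eqxx mulr1 expr2.
by move=> j /negbTE ji; rewrite !mxE eq_sym ji mulr0 mul0r.
Qed.

Lemma bfM (R : realType) n p (A : 'M[R]_n) (P : 'M[R]_(n,p)) x y :
  bf (P^T *m A *m P) x y = bf A (P *m x) (P *m y).
Proof. by rewrite /bf !trmx_mul !mulmxA. Qed.

Lemma vnorm2_bf (R : realType) n (x : 'cV[R]_n) : vnorm2 x = bf 1%:M x x.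
Proof. by rewrite bf1. Qed.

Lemma vnorm2_ge0 (R : realType) n (x : 'cV[R]_n) : 0 <= vnorm2 x.
Proof. by rewrite /vnorm2; apply: sumr_ge0 => i _; rewrite sqr_ge0. Qed.

Lemma sq_le_vnorm2 (R : realType) n (x : 'cV[R]_n) i : x i 0 ^+ 2 <= vnorm2 x.
Proof.
rewrite /vnorm2 (bigD1 i) //= lerDl; apply: sumr_ge0 => j _; exact: sqr_ge0.
Qed.

Lemma ab_le (R : realType) (a b v : R) : 0 <= a -> 0 <= b ->
  a ^+ 2 <= v -> b ^+ 2 <= v -> a * b <= v.
Proof. move=> ha hb h1 h2; have := sqr_ge0 (a - b); nra. Qed.

Lemma absprod (R : realType) n (x : 'cV[R]_n) i j : `|x i 0 * x j 0| <= vnorm2 x.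
Proof.
have hi := sq_le_vnorm2 x i; have hj := sq_le_vnorm2 x j.
rewrite normrM; rewrite -(real_normK (num_real (x i 0))) in hi; rewrite -(real_normK (num_real (x j 0))) in hj.
by apply: ab_le.
Qed.

Lemma bf_bound (R : realType) n (A : 'M[R]_n) x :
  `|bf A x x| <= (\sum_i \sum_j `|A i j|) * vnorm2 x.
Proof.
rewrite bfE mulr_suml; apply: le_trans (ler_norm_sum _ _ _) _.
apply: ler_sum => i _; rewrite mulr_suml; apply: le_trans (ler_norm_sum _ _ _) _.
apply: ler_sum => j _.
have -> : x i 0 * A i j * x j 0 = A i j * (x i 0 * x j 0) by ring.
rewrite normrM; apply: ler_wpM2l => //; exact: absprod.
Qed.

Lemma disc (R : realType) (a b c : R) : 0 <= c ->
  (forall t, 0 <= a + 2 * t * b + t ^+ 2 * c) -> b ^+ 2 <= a * c.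
Proof.
move=> hc H; have ha := H 0; rewrite !(mul0r, mulr0, expr0n, addr0) /= in ha; rewrite ?mul0r ?addr0 in ha.
case: (ltrP 0 c) => hc'.
  have := H (- b / c).
  move=> h; rewrite -subr_ge0.
  have -> : a * c - b ^+ 2 = c * (a + 2 * (- b / c) * b + (- b / c) ^+ 2 * c).
    by field; rewrite gt_eqF.
  by rewrite mulr_ge0 // ltW.
have c0 : c = 0 by apply/eqP; rewrite eq_le hc' hc.
rewrite c0 mulr0; case: (eqVneq b 0) => [->|bn0]; first by rewrite expr0n.
have := H (- (a + 1) / (2 * b)); rewrite c0 mulr0 addr0.
have -> : 2 * (- (a + 1) / (2 * b)) * b = - (a + 1) by field; rewrite bn0.
lra.
Qed.

Lemma CS (R : realType) n (A : 'M[R]_n) x y : A^T = A -> (forall z, 0 <= bf A z z) ->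
  bf A y x ^+ 2 <= bf A x x * bf A y y.
Proof.
move=> sA psd; apply: disc; first exact: psd.
move=> t; have := psd (x + t *: y).
rewrite !(bfDl, bfDr, bfZl, bfZr) (bf_sym x y sA).
by congr (_ <= _); ring.
Qed.

Lemma quant (R : realType) n (A : 'M[R]_n) : A^T = A -> (forall z, 0 <= bf A z z) ->
  A \in unitmx -> exists2 eta : R, 0 < eta & forall x, eta * vnorm2 x <= bf A x x.
Proof.
move=> sA psd uA.
set T := \sum_i \sum_j `|invmx A i j|.
have T0 : 0 <= T by apply: sumr_ge0 => i _; apply: sumr_ge0 => j _.
exists (T + 1)^-1; first by rewrite invr_gt0 ltr_wpDl.
move=> x; set z := invmx A *m x.
have Az : A *m z = x by rewrite /z mulKVmx.
have e1 : bf A x z = vnorm2 x by rewrite vnorm2_bf /bf -mulmxA Az mulmx1.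
have e2 : bf A z z = bf (invmx A) x x.
  rewrite /bf -mulmxA Az -[z^T](mulmx1) -/(bf 1%:M z x) bf_sym ?trmx1 //.
  by rewrite /bf mulmx1 /z mulmxA.
have := CS z x sA psd; rewrite e1 e2.
have hb : bf (invmx A) x x <= T * vnorm2 x by apply: le_trans (ler_norm _) (bf_bound _ _).
have hv := vnorm2_ge0 x; have hq := psd x.
set v := vnorm2 x; set q := bf A x x; set b := bf (invmx A) x x.
move: hb hv hq; rewrite -/v -/q -/b => hb hv hq h.
rewrite ler_pdivrMl ?ltr_wpDl //.
case: (eqVneq v 0) => [->|vn0]; first by rewrite mulr_ge0 ?addr_ge0.
have vp : 0 < v by rewrite lt_def vn0 hv.
have : v ^+ 2 <= q * T * v by apply: le_trans h _; rewrite mulrC -mulrA ler_wpM2l.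
rewrite expr2 => h2. have : v <= q * T by rewrite -(ler_pM2r vp).
nra.
Qed.

Lemma bf_scal (R : realType) n (s : R) (x : 'cV[R]_n) : bf s%:M x x = s * vnorm2 x.
Proof. by rewrite vnorm2_bf /bf mul_mx_scalar -scalemxAl mxE mulmx1. Qed.

Lemma vnorm2_0 (R : realType) n (A : 'M[R]_n) x : vnorm2 x = 0 -> bf A x x = 0.
Proof.
move=> v0; apply/eqP; rewrite -normr_le0.
by apply: le_trans (bf_bound _ _) _; rewrite v0 mulr0.
Qed.

Lemma eig_lb (R : realType) n (A : 'M[R]_n) g : A^T = A ->
  (forall mu, eigenvalue A mu -> g <= mu) -> forall x, g * vnorm2 x <= bf A x x.
Proof.
move=> sA eg.
pose S : set R := fun s : R => s <= g /\ forall x, s * vnorm2 x <= bf A x x.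
set T := \sum_i \sum_j `|A i j|.
have inS : S (Num.min g (- T)).
  split; first by rewrite ge_min lexx.
  move=> x; have hv := vnorm2_ge0 x.
  apply: le_trans (_ : - T * vnorm2 x <= _).
    by rewrite ler_wpM2r // ge_min lexx orbT.
  by have := bf_bound A x; rewrite ler_norml mulNr => /andP [].
have ubS : ubound S g by move=> s [].
have hS : has_sup S by split; [exists (Num.min g (- T)) | exists g].
set s := sup S.
have sg : s <= g by apply: ge_sup => //; exists (Num.min g (- T)).
have sS : forall x, s * vnorm2 x <= bf A x x.
  move=> x; rewrite leNgt; apply/negP => hlt.
  have hv := vnorm2_ge0 x.
  case: (eqVneq (vnorm2 x) 0) => [v0|vn0].
    by move: hlt; rewrite v0 mulr0 vnorm2_0 // ltxx.
  have vp : 0 < vnorm2 x by rewrite lt_def vn0 hv.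
  have ep : 0 < (s * vnorm2 x - bf A x x) / vnorm2 x by rewrite divr_gt0 // subr_gt0.
  have [t [_ tS] lt] := sup_adherent ep hS.
  have := tS x; rewrite leNgt => /negP; apply.
  have : (s - (s * vnorm2 x - bf A x x) / vnorm2 x) * vnorm2 x < t * vnorm2 x.
    by rewrite ltr_pM2r.
  apply: le_lt_trans; rewrite mulrBl -mulrA mulVf // mulr1; lra.
suff : g <= s.
  move=> gs x; apply: le_trans (sS x); rewrite ler_wpM2r //; exact: vnorm2_ge0.
rewrite leNgt; apply/negP => sltg.
pose B := A - s%:M.
have sB : B^T = B by rewrite /B linearB /= sA tr_scalar_mx.
have bfB : forall z, bf B z z = bf A z z - s * vnorm2 z by move=> z; rewrite bfB bf_scal.
have psd : forall z, 0 <= bf B z z by move=> z; rewrite bfB subr_ge0.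
have uB : B \in unitmx.
  rewrite unitmxE unitfE; apply/negP => /det0P [v vn0 vB].
  have : eigenvalue A s.
    apply/eigenvalueP; exists v => //.
    by move: vB; rewrite /B mulmxBr mul_mx_scalar => /eqP; rewrite subr_eq0 => /eqP.
  by move/eg; rewrite leNgt sltg.
have [eta etap heta] := quant sB psd uB.
have : S (Num.min g (s + eta)).
  split; first by rewrite ge_min lexx.
  move=> x; have hv := vnorm2_ge0 x; have := heta x; rewrite bfB => h.
  apply: le_trans (_ : (s + eta) * vnorm2 x <= _).
    by rewrite ler_wpM2r // ge_min lexx orbT.
  lra.
move/(sup_upper_bound hS); rewrite -/s ge_min leNgt sltg /= leNgt.
by rewrite ltrDl etap.
Qed.

Lemma vnorm2Z (R : realType) n (c : R) (x : 'cV[R]_n) : vnorm2 (c *: x) = c ^+ 2 * vnorm2 x.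
Proof. by rewrite !vnorm2_bf bfZl bfZr expr2 mulrA. Qed.

Lemma vnorm2_mul (R : realType) n (A : 'M[R]_n) x : vnorm2 (A *m x) = bf (A^T *m A) x x.
Proof. by rewrite vnorm2_bf -bfM mulmx1. Qed.

Lemma sq_le (R : realType) (a o : R) : 0 <= a -> 0 <= o -> a ^+ 2 <= o ^+ 2 -> a <= o.
Proof.
move=> ha ho h; case: (lerP a o) => // lt; exfalso.
have : o * o < a * a by apply: le_lt_trans (_ : o * o <= o * a) _; [rewrite ler_wpM2l // ltW | rewrite ltr_pM2r // (le_lt_trans ho)].
rewrite -!expr2; lra.
Qed.

Lemma abs_le_sq (R : realType) (b o : R) : 0 <= o -> b ^+ 2 <= o ^+ 2 -> `|b| <= o.
Proof.
move=> ho h; rewrite -(real_normK (num_real b)) in h.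
exact: sq_le.
Qed.

Lemma opnorm_bound (R : realType) k (hk : (0 < k)%N) (A : 'M[R]_k) x :
  `|bf A x x| <= opnorm A * vnorm2 x.
Proof.
pose E := [set Num.sqrt (vnorm2 (A *m x)) | x in [set x : 'cV[R]_k | vnorm2 x = 1]]%classic.
have -> : opnorm A = sup E by [].
set T := \sum_i \sum_j `|(A^T *m A) i j|.
have hS : has_sup E.
  split.
    exists (Num.sqrt (vnorm2 (A *m delta_mx (Ordinal hk) 0))).
    exists (delta_mx (Ordinal hk) 0) => //.
    change (vnorm2 (delta_mx (Ordinal hk) 0 : 'cV[R]_k) = 1); rewrite /vnorm2 (bigD1 (Ordinal hk)) //= big1 ?addr0.
      by rewrite mxE !eqxx expr1n.
    by move=> i /negbTE ni; rewrite mxE ni /= expr0n.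
  exists (Num.sqrt T) => _ [u u1 <-].
  rewrite ler_sqrt; last by apply: sumr_ge0 => i _; apply: sumr_ge0.
  rewrite vnorm2_mul; apply: le_trans (ler_norm _) _.
  by apply: le_trans (bf_bound _ _) _; move: u1 => /= ->; rewrite mulr1.
have unit_bd : forall u, vnorm2 u = 1 -> `|bf A u u| <= sup E.
  move=> u u1.
  have hE : Num.sqrt (vnorm2 (A *m u)) <= sup E.
    by apply: sup_upper_bound => //; exists u.
  have s0 : 0 <= sup E by apply: le_trans hE; exact: sqrtr_ge0.
  apply: abs_le_sq => //.
  have psd1 : forall z : 'cV[R]_k, 0 <= bf 1%:M z z by move=> z; rewrite -vnorm2_bf vnorm2_ge0.
  have := CS (A *m u) u (trmx1 _ _) psd1.
  rewrite -!vnorm2_bf u1 mulr1 /bf mulmx1 mulmxA => h; apply: le_trans h _.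
  rewrite -(sqr_sqrtr (vnorm2_ge0 (A *m u))).
  by rewrite !expr2 ler_pM // sqrtr_ge0.
have hv := vnorm2_ge0 x.
case: (eqVneq (vnorm2 x) 0) => [v0|vn0].
  by rewrite vnorm2_0 // v0 normr0 mulr0.
have vp : 0 < vnorm2 x by rewrite lt_def vn0 hv.
set r := Num.sqrt (vnorm2 x).
have rp : 0 < r by rewrite sqrtr_gt0.
have r2 : r ^+ 2 = vnorm2 x by rewrite sqr_sqrtr.
set u := r^-1 *: x.
have xe : x = r *: u by rewrite /u scalerA divff ?gt_eqF // scale1r.
have u1 : vnorm2 u = 1 by rewrite vnorm2Z exprVn r2 mulVf.
have -> : bf A x x = vnorm2 x * bf A u u.
  by rewrite {1 2}xe bfZl bfZr mulrA -expr2 r2.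
rewrite normrM ger0_norm // mulrC ler_wpM2r //; exact: unit_bd.
Qed.

Lemma projI_delta (R : realType) k (I : {set 'I_k}) (e : 'I_k) (He : e \in I) :
  projI R I *m (delta_mx e 0 : 'cV[R]_k) = delta_mx (enum_rank_in He e) 0.
Proof.
apply/matrixP => i j; rewrite !mxE ord1 eqxx andbT.
rewrite (bigD1 e) //= big1 ?addr0; last first.
  by move=> l /negbTE le; rewrite !mxE le /= mulr0.
rewrite !mxE eqxx mulr1.
case: (eqVneq i (enum_rank_in He e)) => [->|ne].
  by rewrite enum_rankK_in // eqxx.
suff : enum_val i != e by move/negbTE ->.
apply: contra ne => /eqP ei; apply/eqP; apply: enum_val_inj.
by rewrite enum_rankK_in.
Qed.

Lemma projIT_delta (R : realType) k (I : {set 'I_k}) (e : 'I_k) (He : e \in I) :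
  (projI R I)^T *m (projI R I *m delta_mx e 0) = (delta_mx e 0 : 'cV[R]_k).
Proof.
rewrite projI_delta; apply/matrixP => j z; rewrite !mxE ord1 eqxx andbT.
rewrite (bigD1 (enum_rank_in He e)) //= big1 ?addr0; last first.
  by move=> l /negbTE le; rewrite !mxE le /= ?mulr0 ?mul0r.
by rewrite !mxE eqxx mulr1 enum_rankK_in // eq_sym.
Qed.

Lemma bf_delta (R : realType) k (S : 'M[R]_k) (e : 'I_k) :
  bf S (delta_mx e 0 : 'cV[R]_k) (delta_mx e 0) = S e e.
Proof.
by rewrite /bf trmx_delta -rowE -colE !mxE.
Qed.

Lemma risk_term (R : realType) k (S : 'M[R]_k) (I : {set 'I_k}) (lam : 'cV[R]_#|I|) :
  (lam^T *m subM S I *m lam) 0 0 = bf S ((projI R I)^T *m lam) ((projI R I)^T *m lam).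
Proof. by rewrite /subM /bf trmx_mul trmxK !mulmxA. Qed.

Lemma term_bounds (R : realType) (g d q qh v : R) : 0 < g -> 0 <= d ->
  g * v <= q -> `|q - qh| <= d * v ->
  (1 - d / g) * q <= qh /\ qh <= (1 + d / g) * q.
Proof.
move=> gp d0 h1 h2; have : d * v <= d / g * q.
  have -> : d * v = d / g * (g * v) by field; rewrite gt_eqF.
  by rewrite ler_wpM2l // divr_ge0 // ltW.
move: h2; rewrite ler_norml => /andP [h2 h3] h4.
split; lra.
Qed.

Lemma risk_bounds (R : realType) k (II : {set {set 'I_k}}) (S Sh : 'M[R]_k) (g d : R)
  n lam : 0 < g -> 0 <= d ->
  (forall y, g * vnorm2 y <= bf S y y) ->
  (forall y, `|bf (S - Sh) y y| <= d * vnorm2 y) ->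
  [/\ 0 <= risk II S n lam,
      (1 - d / g) * risk II S n lam <= risk II Sh n lam &
      risk II Sh n lam <= (1 + d / g) * risk II S n lam].
Proof.
move=> gp d0 hl hd; rewrite /risk; split.
- apply: sumr_ge0 => I _; apply: mulr_ge0; first by rewrite invr_ge0 ler0n.
  rewrite risk_term; apply: le_trans (hl _); apply: mulr_ge0; [exact: ltW | exact: vnorm2_ge0].
- rewrite mulr_sumr; apply: ler_sum => I _; rewrite !risk_term.
  set y := _ *m lam I.
  have := hd y; rewrite bfB => hdy.
  have [h _] := term_bounds gp d0 (hl y) hdy.
  rewrite mulrCA; apply: ler_wpM2l => //; rewrite invr_ge0 ler0n //.
- rewrite mulr_sumr; apply: ler_sum => I _; rewrite !risk_term.
  set y := _ *m lam I.
  have := hd y; rewrite bfB => hdy.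
  have [_ h] := term_bounds gp d0 (hl y) hdy.
  rewrite mulrCA; apply: ler_wpM2l => //; rewrite invr_ge0 ler0n //.
Qed.

Lemma final_alg (R : realType) (t Rh Rs C Hh Hs : R) : 0 <= t -> t <= 1/2 ->
  0 <= Rs -> Rs <= C -> (1 - t) * Rh <= Hh -> Hh <= Hs -> Hs <= (1 + t) * Rs ->
  Rh <= Rs + 4 * t * C.
Proof.
move=> t0 t1 r0 rc h1 h2 h3.
have h : (1 - t) * Rh <= (1 + t) * Rs by lra.
have ht : 0 < 1 - t by lra.
rewrite -(ler_pM2l ht); apply: le_trans h _.
have hh : Rs <= 2 * (1 - t) * C by nra.
have : 2 * t * Rs <= 2 * t * (2 * (1 - t) * C) by rewrite ler_wpM2l //; lra.
nra.
Qed.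

End Helpers.
Import Helpers.

Theorem theoremE3 (R : realType) (k m : nat) (hk : (0 < k)%N)
  (II : {set {set 'I_k}}) (c : {set 'I_k} -> 'cV[R]_m) (B : 'cV[R]_m)
  (Sigma Sigmah : 'M[R]_k) (gamma delta : R)
  (ns nh : {set 'I_k} -> nat)
  (ls lh : forall I : {set 'I_k}, 'cV[R]_#|I|)
  (I0 : {set 'I_k}) (n0 : nat) :
  let e1 : 'I_k := Ordinal hk in
  let a : 'cV[R]_k := delta_mx e1 0 in
  (forall I, I \in II -> (0 < #|I|)%N) ->
  (forall I r, I \in II -> 0 <= c I r 0) ->
  (forall r, 0 <= B r 0) ->
  sym_mx Sigma -> posdef_mx Sigma -> min_eigenvalue Sigma gamma ->
  sym_mx Sigmah ->
  delta = opnorm (Sigma - Sigmah) -> delta <= gamma / 2 ->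
  is_minimizer II c B a Sigma ns ls ->
  is_minimizer II c B a Sigmah nh lh ->
  I0 \in II -> e1 \in I0 -> (1 <= n0)%N ->
  vle (n0%:R *: c I0) B ->
  (forall n : nat, vle (n%:R *: c I0) B -> (n <= n0)%N) ->
  risk II Sigma nh lh
    <= risk II Sigma ns ls + (4 * delta / gamma) * (Sigma e1 e1 / n0%:R).
Proof.
move=> e1 a hI hc hB sS pdS [eigg ming] sSh dE dle [fs us ms] [fh uh mh] I0in e1I0 n0pos vn0 n0max.
have gp : 0 < gamma.
  case/eigenvalueP: eigg => v vS vn0'.
  have vT : v^T != 0 by rewrite trmx_eq0.
  have := pdS _ vT; rewrite trmxK vS -scalemxAl mxE.
  have := vnorm2_ge0 v^T; rewrite vnorm2_bf /bf trmxK mulmx1.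
  move=> h1 h2; nra.
have hl : forall y, gamma * vnorm2 y <= bf Sigma y y.
  by apply: eig_lb => // mu /ming.
have hd : forall y, `|bf (Sigma - Sigmah) y y| <= delta * vnorm2 y.
  by move=> y; rewrite dE; exact: opnorm_bound hk _ _.
have va : vnorm2 a = 1 by rewrite vnorm2_bf bf_delta mxE eqxx.
have d0 : 0 <= delta.
  by have := hd a; rewrite va mulr1; apply: le_trans; exact: normr_ge0.
pose nc := fun I : {set 'I_k} => if I == I0 then n0 else 0%N.
pose lc := fun I : {set 'I_k} => projI R I *m a.
have fc : feasible II c B nc.
  rewrite /feasible (bigD1 I0) //= big1 ?addr0 /nc ?eqxx //.
  by move=> I /andP [_ /negbTE ->]; rewrite scale0r.
have uc : unbiased II a nc lc.
  rewrite /unbiased (bigD1 I0) /=; last by rewrite I0in /nc eqxx.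
  rewrite big1 ?addr0; first by rewrite /lc projIT_delta.
  by move=> I /andP [/andP [_]]; rewrite /nc; case: ifP.
have rc : risk II Sigma nc lc = Sigma e1 e1 / n0%:R.
  rewrite /risk (bigD1 I0) /=; last by rewrite I0in /nc eqxx.
  rewrite big1 ?addr0; last by move=> I /andP [/andP [_]]; rewrite /nc; case: ifP.
  by rewrite risk_term /lc projIT_delta // (bf_delta Sigma e1) /nc eqxx mulrC.
have [Rs0 _ Hsu] := risk_bounds II ns ls gp d0 hl hd.
have [_ Hhl _] := risk_bounds II nh lh gp d0 hl hd.
have Rsc : risk II Sigma ns ls <= Sigma e1 e1 / n0%:R by rewrite -rc; exact: ms.
have hh : risk II Sigmah nh lh <= risk II Sigmah ns ls by exact: mh.
have t1 : delta / gamma <= 1 / 2.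
  by rewrite ler_pdivrMr // mulrC mul1r.
have -> : 4 * delta / gamma = 4 * (delta / gamma) by rewrite mulrA.
apply: (final_alg _ t1 Rs0 Rsc Hhl hh Hsu).
by rewrite divr_ge0 // ltW.
Qed.
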